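(* Let $\psi^{(0)}\in\mathbb{R}$ and $\psi^{(1)}\in\mathbb{R}^2$ be realizable, i.e. $\psi^{(0)}>0$ and $|\psi^{(1)}|\le \psi^{(0)}$, and let $\psi^{(2)}=\psi^{(2)}(\psi^{(0)},\psi^{(1)})$ be given by the $M_1$ closure. Let $\nu\in\mathbb{R}^2$ be an arbitrary unit vector. Then for each choice of sign, the pair $\bigl(\psi^{(0)}\pm \psi^{(1)}\cdot\nu,\ \psi^{(1)}\pm \psi^{(2)}\nu\bigr)$ is realizable.
   Context: Moments of an angular flux $\psi\ge 0$ (a non-negative density or measure, Dirac masses allowed) on the unit sphere are $\psi^{(0)}=\int\psi\,d\Omega$, $\psi^{(1)}=\int\Omega\psi\,d\Omega$, $\psi^{(2)}=\int\Omega\Omega^T\psi\,d\Omega$. A pair $(\psi^{(0)},\psi^{(1)})$ is called realizable if it is the zeroth and first moment of a non-negative density; this holds iff $\psi^{(0)}>0$ and $|\psi^{(1)}|\le\psi^{(0)}$. The $M_1$ closure (entropy closure for photons) is $\psi^{(2)}=D(\psi^{(1)}/\psi^{(0)})\,\psi^{(0)}$ with $D(n)=\frac{1-\chi(|n|)}{2}\mathrm{id}+\frac{3\chi(|n|)-1}{2}\frac{nn^T}{|n|^2}$ and Eddington factor $\chi(f)=\frac{3+4f^2}{5+2\sqrt{4-3f^2}}$ for $f\in[0,1]$; $\psi^{(2)}$ is the second moment of a non-negative density realizing $(\psi^{(0)},\psi^{(1)})$ (the entropy minimizer). Here the problem is two-dimensional: $\psi^{(1)}\in\mathbb{R}^2$,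 $\psi^{(2)}$ is a $2\times2$ matrix. *)

(* Defs.v *)
From HB Require Import structures.
From mathcomp Require Import all_boot all_order all_algebra.
Set Implicit Arguments. Unset Strict Implicit. Unset Printing Implicit Defensive.
Import Order.TTheory GRing.Theory Num.Theory.
Local Open Scope ring_scope.

Section M1.
Variable R : rcfType.

Definition dot2 (u v : 'cV[R]_2) : R := \sum_(i < 2) u i 0 * v i 0.
Definition vnorm2 (u : 'cV[R]_2) : R := Num.sqrt (dot2 u u).

(* Realizability of (psi0, psi1): moments of a non-negative measure on the
   unit circle (Dirac masses and the zero measure allowed); the set of such
   moment pairs is the closed cone |psi1| <= psi0 (which forces psi0 >= 0). *)
Definition realizable (p0 : R) (p1 : 'cV[R]_2) : Prop :=
  0 <= p0 /\ vnorm2 p1 <= p0.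

Definition eddington (f : R) : R :=
  (3 + 4 * f ^+ 2) / (5 + 2 * Num.sqrt (4 - 3 * f ^+ 2)).

(* D(n) = (1-chi)/2 id + (3chi-1)/2 n n^T / |n|^2 ; at n = 0 the second term
   has coefficient (3 chi(0) - 1)/2 = 0 and division by 0 is 0 in MathComp. *)
Definition Dmat (n : 'cV[R]_2) : 'M[R]_2 :=
  let chi := eddington (vnorm2 n) in
  ((1 - chi) / 2) *: 1%:M
  + ((3 * chi - 1) / 2 / (vnorm2 n) ^+ 2) *: (n *m n^T).

Definition psi2_M1 (p0 : R) (p1 : 'cV[R]_2) : 'M[R]_2 :=
  p0 *: Dmat (p0^-1 *: p1).

End M1.

(* Main.v *)
Require Import Defs.
From mathcomp Require Import all_boot all_order all_algebra.
From mathcomp Require Import ring lra.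
Import Order.TTheory GRing.Theory Num.Theory.
Local Open Scope ring_scope.

Lemma lift01 : lift ord0 ord0 = 1 :> 'I_2.
Proof. by apply/val_inj. Qed.

Lemma dot2E (R : rcfType) (u v : 'cV[R]_2) : dot2 u v = u 0 0 * v 0 0 + u 1 0 * v 1 0.
Proof. by rewrite /dot2 !big_ord_recl big_ord0 addr0 lift01. Qed.

Lemma Dnu (R : rcfType) (n nu : 'cV[R]_2) i :
  (Dmat n *m nu) i 0 = (1 - eddington (vnorm2 n)) / 2 * nu i 0
     + (3 * eddington (vnorm2 n) - 1) / 2 / (vnorm2 n) ^+ 2 * n i 0 * dot2 n nu.
Proof.
rewrite /Dmat !mxE !big_ord_recl !big_ord0 !mxE !big_ord1 !mxE lift01 dot2E.
have -> : (ord0 : 'I_1) = 0 by apply/val_inj.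
have -> : (ord0 : 'I_2) = 0 by apply/val_inj.
case: i => [[|[|//]] Hi].
  have -> : Ordinal Hi = 0 by apply/val_inj.
  rewrite /=. ring.
have -> : Ordinal Hi = 1 by apply/val_inj.
rewrite /=. ring.
Qed.
Lemma key (R : rcfType) (X Y u v s r c : R) :
 u ^+ 2 + v ^+ 2 = 1 -> s = 1 \/ s = -1 -> 0 <= r ->
 r ^+ 2 = 4 - 3 * (X ^+ 2 + Y ^+ 2) -> X ^+ 2 + Y ^+ 2 <= 1 ->
 ((X = 0 /\ Y = 0) \/ c * (2 + r) = 3) ->
 0 <= 1 + s * (X * u + Y * v) /\
 (X + s * ((r - 1) / 3 * u + c * X * (X * u + Y * v))) ^+ 2 +
 (Y + s * ((r - 1) / 3 * v + c * Y * (X * u + Y * v))) ^+ 2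
   <= (1 + s * (X * u + Y * v)) ^+ 2.
Proof.
move=> huv hs hr hr2 hF hc.
set k := X * u + Y * v.
have hk : k ^+ 2 + (X * v - Y * u) ^+ 2 = (X ^+ 2 + Y ^+ 2) * (u ^+ 2 + v ^+ 2).
  by rewrite /k; ring.
rewrite huv mulr1 in hk.
have hm := sqr_ge0 (X * v - Y * u).
have hk1 : k ^+ 2 <= 1 by lra.
have hXY : 0 <= X ^+ 2 + Y ^+ 2 by rewrite addr_ge0 // sqr_ge0.
have hr1 : 1 <= r.
  rewrite leNgt; apply/negP => hlt.
  have : r ^+ 2 < 1 by rewrite expr2; nra.
  lra.
have hr22 : r <= 2.
  rewrite leNgt; apply/negP => hlt.
  have : 4 < r ^+ 2 by rewrite expr2; nra.
  lra.
split.
  by case: hs => ->; nra.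
have E : forall s', s' = 1 \/ s' = -1 -> (X + s' * ((r - 1) / 3 * u + c * X * k)) ^+ 2 +
 (Y + s' * ((r - 1) / 3 * v + c * Y * k)) ^+ 2 =
 (1 + s' * c * k) ^+ 2 * (X ^+ 2 + Y ^+ 2) + 2 * s' * ((r - 1) / 3) * k * (1 + s' * c * k)
   + ((r - 1) / 3) ^+ 2 * (u ^+ 2 + v ^+ 2).
  by move=> s' [] ->; rewrite /k; ring.
have hs2 : s ^+ 2 = 1 by case: hs => ->; ring.
rewrite (E s hs) huv.
have HF : X ^+ 2 + Y ^+ 2 = (4 - r ^+ 2) / 3 by rewrite hr2; field.
case: hc => [[hX hY]|hc].
  have hk0 : k = 0 by rewrite /k hX hY; ring.
  rewrite hk0 hX hY.
  have hr2' : r = 2 by nra.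
  rewrite hr2'. lra.
have hc' : c = 3 / (2 + r).
  rewrite -hc; field; lra.
rewrite HF hc' -subr_ge0.
have hr0 : 2 + r != 0 by lra.
have -> : (1 + s * k) ^+ 2 -
  ((1 + s * (3 / (2 + r)) * k) ^+ 2 * ((4 - r ^+ 2) / 3) +
   2 * s * ((r - 1) / 3) * k * (1 + s * (3 / (2 + r)) * k) + ((r - 1) / 3) ^+ 2 * 1)
  = 2 * (r - 1) * (3 * s * k + 2 + r) ^+ 2 / (9 * (2 + r)).
  case: hs => ->; field; lra.
apply: divr_ge0; last by lra.
apply: mulr_ge0; [lra | exact: sqr_ge0].
Qed.

Theorem lemma1 (R : rcfType) (p0 : R) (p1 : 'cV[R]_2) (nu : 'cV[R]_2)
  (hp0 : 0 < p0) (hreal : realizable p0 p1) (hnu : vnorm2 nu = 1)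
  (s : R) (hs : s = 1 \/ s = -1) :
  realizable (p0 + s * dot2 p1 nu) (p1 + s *: (psi2_M1 p0 p1 *m nu)).
Proof.
case: hreal => _ hreal.
have hp0' : p0 != 0 by rewrite gt_eqF.
set n := p0^-1 *: p1.
have p1E : p1 = p0 *: n by rewrite /n scalerA divff // scale1r.
have hpsi : psi2_M1 p0 p1 = p0 *: Dmat n by [].
rewrite hpsi -scalemxAl.
move: hreal; rewrite p1E => hreal.
clearbody n; clear hpsi p1E.
set X := n 0 0; set Y := n 1 0; set u := nu 0 0; set v := nu 1 0.
have huv : u ^+ 2 + v ^+ 2 = 1.
  have h0 : 0 <= dot2 nu nu by rewrite dot2E -!expr2 addr_ge0 // sqr_ge0.
  move: hnu; rewrite /vnorm2 => hnu.
  have := sqr_sqrtr h0; rewrite hnu expr1n dot2E -!expr2 => <-. by [].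
have dnn : dot2 n n = X ^+ 2 + Y ^+ 2 by rewrite dot2E -!expr2.
have hF : X ^+ 2 + Y ^+ 2 <= 1.
  have h0 : 0 <= dot2 (p0 *: n) (p0 *: n) by rewrite dot2E -!expr2 addr_ge0 // sqr_ge0.
  have h1 := sqr_sqrtr h0.
  have h2 : 0 <= Num.sqrt (dot2 (p0 *: n) (p0 *: n)) := sqrtr_ge0 _.
  have h3 : dot2 (p0 *: n) (p0 *: n) <= p0 ^+ 2.
    rewrite -h1; move: hreal; rewrite /vnorm2 => hreal; nra.
  move: h3; rewrite dot2E !mxE -/X -/Y => h3.
  have h4 : p0 ^+ 2 * (X ^+ 2 + Y ^+ 2) <= p0 ^+ 2 * 1 by rewrite mulr1; lra.
  rewrite ler_pM2l in h4 => //. by rewrite exprn_gt0.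
have hXY : 0 <= X ^+ 2 + Y ^+ 2 by rewrite addr_ge0 // sqr_ge0.
have hf2 : vnorm2 n ^+ 2 = X ^+ 2 + Y ^+ 2 by rewrite /vnorm2 sqr_sqrtr dnn.
set r := Num.sqrt (4 - 3 * vnorm2 n ^+ 2).
have hr : 0 <= r := sqrtr_ge0 _.
have hr2 : r ^+ 2 = 4 - 3 * (X ^+ 2 + Y ^+ 2) by rewrite /r sqr_sqrtr hf2 //; lra.
have hchi : eddington (vnorm2 n) = (5 - 2 * r) / 3.
  rewrite /eddington -/r hf2.
  have : 5 + 2 * r != 0 by lra.
  move=> h; apply/eqP; rewrite eqr_div //; last by lra.
  apply/eqP. rewrite -[X ^+ 2 + Y ^+ 2]/(X ^+ 2 + Y ^+ 2).
  have -> : X ^+ 2 + Y ^+ 2 = (4 - r ^+ 2) / 3 by rewrite hr2; field.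
  by field.
set c := (3 * eddington (vnorm2 n) - 1) / 2 / vnorm2 n ^+ 2.
have hc : (X = 0 /\ Y = 0) \/ c * (2 + r) = 3.
  have [hz|hnz] := eqVneq (X ^+ 2 + Y ^+ 2) 0.
    left. have hX : X ^+ 2 = 0 by have := sqr_ge0 Y; have := sqr_ge0 X; lra.
    have hY : Y ^+ 2 = 0 by have := sqr_ge0 Y; have := sqr_ge0 X; lra.
    by move/eqP: hX; move/eqP: hY; rewrite !sqrf_eq0 => /eqP -> /eqP ->.
  right. rewrite /c hchi hf2.
  have -> : (3 * ((5 - 2 * r) / 3) - 1) / 2 = (2 - r) by field.
  apply/eqP; rewrite -subr_eq0; apply/eqP.
  have -> : (2 - r) / (X ^+ 2 + Y ^+ 2) * (2 + r) - 3 =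
     (4 - r ^+ 2 - 3 * (X ^+ 2 + Y ^+ 2)) / (X ^+ 2 + Y ^+ 2) by field.
  rewrite hr2; have -> : 4 - (4 - 3 * (X ^+ 2 + Y ^+ 2)) - 3 * (X ^+ 2 + Y ^+ 2) = 0 by ring.
  by rewrite mul0r.
have [K1 K2] := @key R X Y u v s r c huv hs hr hr2 hF hc.
have hal : (1 - eddington (vnorm2 n)) / 2 = (r - 1) / 3 by rewrite hchi; field.
have Wi : forall i, (p0 *: n + s *: (p0 *: (Dmat n *m nu))) i 0 =
   p0 * (n i 0 + s * ((r - 1) / 3 * nu i 0 + c * n i 0 * (X * u + Y * v))).
  move=> i; have := @Dnu R n nu i; rewrite mxE => hD; rewrite !mxE hD hal dot2E -/X -/Y -/u -/v -/c; ring.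
split.
  rewrite dot2E !mxE -/X -/Y -/u -/v.
  have -> : p0 + s * (p0 * X * u + p0 * Y * v) = p0 * (1 + s * (X * u + Y * v)) by ring.
  by apply: mulr_ge0 => //; lra.
rewrite /vnorm2 dot2E !Wi -/X -/Y -/u -/v.
have -> : p0 + s * dot2 (p0 *: n) nu = p0 * (1 + s * (X * u + Y * v)).
  rewrite dot2E !mxE -/X -/Y -/u -/v; ring.
have hpos : 0 <= p0 * (1 + s * (X * u + Y * v)) by apply: mulr_ge0 => //; lra.
rewrite -(ger0_norm hpos) -sqrtr_sqr ler_sqrt; last by rewrite sqr_ge0.
set w0 := (X + _); set w1 := (Y + _).
have -> : p0 * w0 * (p0 * w0) + p0 * w1 * (p0 * w1) = p0 ^+ 2 * (w0 ^+ 2 + w1 ^+ 2) by ring.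
rewrite exprMn; apply: ler_wpM2l; first by rewrite sqr_ge0.
exact: K2.
Qed.
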